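(* Let $P,N>0$. If $\mathcal{C}$ is a $(P,N,1)$-sphere packing, then it is also a $(P,N',L)$-average-radius multiple packing for any $0\le N'<\frac{2(L-1)N}{L}$ and any $L\in\mathbb{Z}_{\ge2}$.
   Context: $\mathcal{B}^n(y,r)$ is the closed Euclidean ball in $\mathbb{R}^n$ of radius $r$ centered at $y$, $\mathcal{B}^n(r)=\mathcal{B}^n(0,r)$. A set $\mathcal{C}\subseteq\mathcal{B}^n(\sqrt{nP})$ is a $(P,N,1)$-sphere packing if $|\mathcal{C}\cap\mathcal{B}^n(y,\sqrt{nN})|\le1$ for every $y\in\mathbb{R}^n$. For $x_1,\dots,x_m\in\mathbb{R}^n$ with centroid $\bar x$, $\overline{\mathrm{rad}}^2(x_1,\dots,x_m)=\frac1m\sum_i\|x_i-\bar x\|_2^2$. A set $\mathcal{C}\subseteq\mathcal{B}^n(\sqrt{nP})$ is a $(P,N',K)$-average-radius multiple packing if every $K+1$ distinct points of $\mathcal{C}$ have average squared radius strictly greater than $nN'$. *)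

(* Defs.v *)
From mathcomp Require Import all_boot all_order all_algebra.
From mathcomp Require Import classical_sets reals.
Set Implicit Arguments. Unset Strict Implicit. Unset Printing Implicit Defensive.
Import Order.TTheory GRing.Theory Num.Theory.
Local Open Scope ring_scope.
Local Open Scope classical_set_scope.

Definition sqnorm (R : realType) (n : nat) (x : 'rV[R]_n) : R :=
  \sum_(i < n) x ord0 i ^+ 2.

Definition ball_cl (R : realType) (n : nat) (y : 'rV[R]_n) (r : R) : set 'rV[R]_n :=
  [set x | Num.sqrt (sqnorm (x - y)) <= r].

Definition centroid (R : realType) (n m : nat) (x : 'I_m -> 'rV[R]_n) : 'rV[R]_n :=
  (m%:R)^-1 *: \sum_(i < m) x i.

Definition avg_sq_rad (R : realType) (n m : nat) (x : 'I_m -> 'rV[R]_n) : R :=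
  (m%:R)^-1 * \sum_(i < m) sqnorm (x i - centroid x).

Definition sphere_packing (R : realType) (n : nat) (P N : R) (C : set 'rV[R]_n) : Prop :=
  C `<=` ball_cl 0 (Num.sqrt (n%:R * P)) /\
  forall y : 'rV[R]_n, forall a b, C a -> C b ->
    ball_cl y (Num.sqrt (n%:R * N)) a -> ball_cl y (Num.sqrt (n%:R * N)) b -> a = b.

Definition avg_radius_multiple_packing (R : realType) (n : nat) (P N' : R) (K : nat)
  (C : set 'rV[R]_n) : Prop :=
  C `<=` ball_cl 0 (Num.sqrt (n%:R * P)) /\
  forall x : 'I_K.+1 -> 'rV[R]_n, injective x -> (forall i, C (x i)) ->
    n%:R * N' < avg_sq_rad x.

(* Main.v *)
Require Import Defs.
From mathcomp Require Import all_boot all_order all_algebra.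
From mathcomp Require Import classical_sets reals.
From mathcomp Require Import ring lra.
Import Order.TTheory GRing.Theory Num.Theory.
Local Open Scope ring_scope.

Section S.
Variable R : realType.

Lemma var_ident (m : nat) (a : 'I_m -> R) : (0 < m)%N ->
  (\sum_i (a i - (m%:R)^-1 * \sum_j a j) ^+ 2) * (2 * m%:R) =
  \sum_i \sum_j (a i - a j) ^+ 2.
Proof.
move=> m0.
have hm : m%:R != 0 :> R by rewrite pnatr_eq0 -lt0n.
set S := \sum_j a j; set Q := \sum_j a j ^+ 2.
set c := m%:R^-1 * S.
have E1 : \sum_i (a i - c) ^+ 2 = Q + (-2 * c) * S + m%:R * c^+2.
  rewrite (eq_bigr (fun i => a i ^+ 2 + (-2 * c) * a i + c ^+ 2)); last by move=> i _; ring.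
  rewrite !big_split /= sumr_const card_ord -mulr_sumr mulr_natl //.
have E2 : forall i, \sum_j (a i - a j) ^+ 2 = m%:R * a i ^+ 2 + (-2 * a i) * S + Q.
  move=> i.
  rewrite (eq_bigr (fun j => a i ^+ 2 + (-2 * a i) * a j + a j ^+ 2)); last by move=> j _; ring.
  rewrite !big_split /= sumr_const card_ord -mulr_sumr mulr_natl //.
rewrite E1 (eq_bigr _ (fun i _ => E2 i)) !big_split /= sumr_const card_ord.
rewrite -mulr_sumr.
rewrite (@eq_bigr _ _ _ _ _ _ (fun i => (-2 * a i) * S) (fun i => (-2 * S) * a i)); last by move=> i _; ring.
rewrite -mulr_sumr -/S -/Q /c.
rewrite -mulr_natl. field; exact hm.
Qed.

Lemma sqnormB (n : nat) (u v : 'rV[R]_n) :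
  sqnorm (u - v) = \sum_k (u ord0 k - v ord0 k) ^+ 2.
Proof. by apply eq_bigr => k _; rewrite !mxE. Qed.

Lemma avg_ident (n m : nat) (x : 'I_m -> 'rV[R]_n) : (0 < m)%N ->
  avg_sq_rad x * (2 * m%:R ^+ 2) = \sum_i \sum_j sqnorm (x i - x j).
Proof.
move=> m0.
have hm : m%:R != 0 :> R by rewrite pnatr_eq0 -lt0n.
rewrite /avg_sq_rad.
have -> : (m%:R)^-1 * (\sum_i sqnorm (x i - centroid x)) * (2 * m%:R ^+ 2)
   = (\sum_i sqnorm (x i - centroid x)) * (2 * m%:R) by field.
rewrite (eq_bigr (fun i => \sum_k (x i ord0 k - (m%:R)^-1 * \sum_j x j ord0 k) ^+ 2)); last first.
  move=> i _; rewrite sqnormB; apply eq_bigr => k _.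
  by rewrite /centroid !mxE summxE.
rewrite exchange_big mulr_suml.
transitivity (\sum_i \sum_k \sum_j (x i ord0 k - x j ord0 k) ^+ 2); last first.
  by apply eq_bigr => i _; rewrite exchange_big; apply eq_bigr => j _; rewrite sqnormB.
rewrite [RHS]exchange_big; apply eq_bigr => k _.
by rewrite var_ident.
Qed.

Lemma sqnormZ (n : nat) (c : R) (u : 'rV[R]_n) : sqnorm (c *: u) = c ^+ 2 * sqnorm u.
Proof. rewrite /sqnorm mulr_sumr; apply eq_bigr => k _; rewrite mxE; ring. Qed.

Lemma sqnorm_ge0 (n : nat) (u : 'rV[R]_n) : 0 <= sqnorm u.
Proof. by apply sumr_ge0 => k _; rewrite sqr_ge0. Qed.

Lemma pair_bound (n : nat) (P N : R) (C : set 'rV[R]_n) a b :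
  0 <= N -> sphere_packing P N C -> C a -> C b -> a <> b ->
  4 * (n%:R * N) <= sqnorm (a - b).
Proof.
move=> N0 [_ H] Ca Cb ab.
rewrite leNgt; apply/negP => hlt; apply: ab.
set y := 2^-1 *: (a + b).
have ea : a - y = 2^-1 *: (a - b) by rewrite /y; apply/matrixP => i j; rewrite !mxE; field.
have eb : b - y = (- 2^-1) *: (a - b) by rewrite /y; apply/matrixP => i j; rewrite !mxE; field.
have hs : 2^-1 ^+ 2 * sqnorm (a - b) <= n%:R * N.
  rewrite -(@ler_pM2l _ 4) //; apply: ltW; apply: le_lt_trans hlt; rewrite mulrA.
  have -> : 4 * 2^-1 ^+ 2 = 1 :> R by field.
  by rewrite mul1r.
have nN0 : 0 <= n%:R * N by rewrite mulr_ge0.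
apply: (H y) => //; rewrite /ball_cl /= ler_sqrt //.
- by rewrite ea sqnormZ.
- by rewrite eb sqnormZ sqrrN.
Qed.

Lemma offdiag_sum (m : nat) (D : R) (i : 'I_m) :
  \sum_j (if i == j then 0 else D) = (m%:R - 1) * D.
Proof.
have -> : \sum_(j < m) (if i == j then 0 else D) = \sum_(j < m) D - \sum_(j < m) (if i == j then D else 0).
  rewrite -sumrB; apply eq_bigr => j _; case: eqP => _; ring.
rewrite -big_mkcond /= [X in _ - X](big_pred1 i); last by move=> j; rewrite /= eq_sym.
rewrite sumr_const card_ord; rewrite -mulr_natl; ring.
Qed.
End S.

Theorem mainTheorem10 (R : realType) (n : nat) (P N N' : R) (L : nat)
  (C : classical_sets.set 'rV[R]_n) :
  0 < P -> 0 < N -> (2 <= L)%N ->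
  sphere_packing P N C ->
  0 <= N' -> N' < 2 * (L%:R - 1) * N / L%:R ->
  avg_radius_multiple_packing P N' L C.
Proof.
move=> P0 N0 L2 SP N'0 HN'.
split; first by case: SP.
move=> x xinj xC.
case: n C x SP xinj xC => [|n] C x SP xinj xC.
  have : x ord0 = x ord_max by apply/matrixP => i [].
  by move/xinj/(congr1 val) => /= h; rewrite -h in L2.
set D := 4 * (n.+1%:R * N).
have Hs : \sum_(i < L.+1) \sum_(j < L.+1) (if i == j then 0 else D) <= \sum_i \sum_j sqnorm (x i - x j).
  apply: ler_sum => i _; apply: ler_sum => j _.
  case: eqP => [_|hij]; first exact: sqnorm_ge0.
  apply: (@pair_bound _ _ P N C) => //; first exact: ltW.
  by move/xinj.
rewrite (eq_bigr _ (fun i _ => @offdiag_sum R _ D i)) sumr_const card_ord -avg_ident // in Hs.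
set A := avg_sq_rad x in Hs *.
have l2 : 2 <= L%:R :> R by rewrite (ler_nat R 2).
have n1 : 1 <= n.+1%:R :> R by rewrite (ler_nat R 1).
have HN2 : N' * L%:R < 2 * (L%:R - 1) * N by rewrite -ltr_pdivlMr // ltr0n; apply: leq_trans L2.
move: Hs HN2; rewrite /D -mulr_natr -addn1 natrD.
set l := L%:R; set nn := n.+1%:R => Hs HN2.
have lp : 0 < l by lra.
have nNp : 0 < nn * N by rewrite mulr_gt0 //; lra.
have h1 : 2 * l * (nn * N) <= A * (l + 1).
  rewrite -(@ler_pM2l _ (2 * (l + 1))); last lra.
  move: Hs; rewrite ?mulr1 => Hs. nra.
have h2 : (nn * N') * l < 2 * (l - 1) * (nn * N).
  have := HN2; rewrite -(@ltr_pM2l _ nn); last lra. nra.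
have h3 : (nn * N') * (l * (l + 1)) < A * (l * (l + 1)).
  have e1 : (nn * N') * (l * (l + 1)) < 2 * (l - 1) * (nn * N) * (l + 1).
    by rewrite mulrA ltr_pM2r //; lra.
  apply: (lt_le_trans e1).
  have e2 : 2 * (l - 1) * (nn * N) * (l + 1) <= 2 * l * (nn * N) * l by nra.
  apply: (le_trans e2).
  have : 2 * l * (nn * N) * l <= A * (l + 1) * l by rewrite ler_pM2r //.
  move=> h; apply: (le_trans h); rewrite -mulrA (mulrC (l + 1)) //.
by rewrite ltr_pM2r in h3; nra.
Qed.
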